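(* Let $G$ be a residually finite group and let $A$ be a finite set. Suppose that $X \subset A^G$ is a strongly irreducible subshift of finite type containing a periodic configuration. Then $X$ is surjunctive and its automorphism group $\mathrm{Aut}(X)$ is residually finite. If in addition $G$ is countable, then $X$ admits a $G$-invariant Borel probability measure with full support.
   Context: $A^G=\{x\colon G\to A\}$ carries the prodiscrete topology and the $G$-shift action $(gx)(h)=x(g^{-1}h)$. A subshift is a closed $G$-invariant subset of $A^G$. A configuration is periodic if its $G$-orbit is finite. A subshift $X$ is of finite type if there are a finite $\Omega\subset G$ and $\mathcal P\subset A^\Omega$ with $X=\{x\in A^G:(gx)|_\Omega\in\mathcal P\ \forall g\in G\}$. $X$ is strongly irreducible if there is a finite $\Delta\subset G$ such that for all finite $\Omega_1,\Omega_2\subset G$ with $\Omega_1\Delta^{-1}\cap\Omega_2=\varnothing$ and all $x_1,x_2\in X$ there is $x\in X$ with $x|_{\Omega_1}=x_1|_{\Omega_1}$, $x|_{\Omega_2}=x_2|_{\Omega_2}$. A cellular automaton on $X$ is a continuous $G$-equivariant map $X\to X$; $X$ is surjunctive if every injective cellular automaton $X\to X$ is surjective; $\mathrm{Aut}(X)$ is the group of bijective cellular automata $X\to X$ under composition. A group is residually finite if the intersection of its finite-index subgroups is trivial. *)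

(* Defs.v *)
From HB Require Import structures.
From mathcomp Require Import all_boot all_order all_algebra.
From mathcomp Require Import monoid.
From mathcomp Require Import all_classical all_reals topology normedtype sequences measure.
Set Implicit Arguments. Unset Strict Implicit. Unset Printing Implicit Defensive.
Import Order.TTheory GRing.Theory Num.Theory.
Import numFieldNormedType.Exports.
Local Open Scope classical_set_scope.

(* A group is presented by a carrier set S inside a type T, with operation
   [mul] and unit [one].  [H] is a subgroup of S. *)
Definition subgroup_in {T : Type} (mul : T -> T -> T) (one : T) (S H : set T) :=
  [/\ H `<=` S, H one,
      (forall x y, H x -> H y -> H (mul x y)) &
      (forall x y, H x -> S y -> mul x y = one -> H y)].

Definition finite_index_in {T : Type} (mul : T -> T -> T) (S H : set T) :=
  exists R : set T, [/\ finite_set R, R `<=` S &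
    forall s, S s -> exists r h, [/\ R r, H h & s = mul r h]].

Definition residually_finite_in {T : Type} (mul : T -> T -> T) (one : T)
  (S : set T) :=
  forall g, S g ->
    (forall H, subgroup_in mul one S H -> finite_index_in mul S H -> H g) ->
    g = one.

Definition residually_finite (G : groupType) :=
  residually_finite_in (fun x y : G => (x * y)%g) 1%g [set: G].

Section Shifts.
Variables (G : groupType) (A : finType).

Definition shift (g : G) (x : G -> A) : G -> A := fun h => x (g^-1 * h)%g.

Definition agree (F : set G) (x y : G -> A) := forall h, F h -> x h = y h.

(* closed in the prodiscrete topology *)
Definition pd_closed (X : set (G -> A)) :=
  forall x, ~ X x -> exists F : set G, finite_set F /\
    forall y, agree F x y -> ~ X y.

Definition shift_invariant (X : set (G -> A)) :=
  forall g x, X x -> X (shift g x).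

Definition subshift (X : set (G -> A)) := pd_closed X /\ shift_invariant X.

Definition finite_type (X : set (G -> A)) :=
  exists (Om : set G) (P : set ({h : G | Om h} -> A)), finite_set Om /\
    X = [set x | forall g, P (fun w => shift g x (proj1_sig w))].

Definition strongly_irreducible (X : set (G -> A)) :=
  exists Delta : set G, finite_set Delta /\
    forall Om1 Om2 : set G, finite_set Om1 -> finite_set Om2 ->
      (forall a d, Om1 a -> Delta d -> ~ Om2 (a * d^-1)%g) ->
      forall x1 x2, X x1 -> X x2 ->
        exists x, [/\ X x, agree Om1 x x1 & agree Om2 x x2].

Definition periodic (x : G -> A) := finite_set [set shift g x | g in [set: G]].

Definition pts (X : set (G -> A)) := {x : G -> A | X x}.

(* open subsets of X for the subspace topology of the prodiscrete topology *)
Definition open_in (X : set (G -> A)) (U : set (pts X)) :=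
  forall x, U x -> exists F : set G, finite_set F /\
    forall y : pts X, agree F (proj1_sig x) (proj1_sig y) -> U y.

(* cellular automaton X -> X: continuous and G-equivariant *)
Definition cellular_automaton (X : set (G -> A)) (tau : pts X -> pts X) :=
  (forall (x : pts X) (F : set G), finite_set F -> exists F' : set G,
     finite_set F' /\ forall y : pts X, agree F' (proj1_sig x) (proj1_sig y) ->
       agree F (proj1_sig (tau x)) (proj1_sig (tau y))) /\
  (forall (g : G) (x y : pts X), proj1_sig y = shift g (proj1_sig x) ->
     proj1_sig (tau y) = shift g (proj1_sig (tau x))).

Definition surjunctive (X : set (G -> A)) :=
  forall tau : pts X -> pts X, cellular_automaton tau -> injective tau ->
    forall y, exists x, tau x = y.

Definition Aut (X : set (G -> A)) : set (pts X -> pts X) :=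
  [set tau | cellular_automaton tau /\ bijective tau].

Definition Aut_residually_finite (X : set (G -> A)) :=
  residually_finite_in (fun f g : pts X -> pts X => f \o g) id (@Aut X).

Definition borel_X (X : set (G -> A)) : set (set (pts X)) :=
  <<s [set: pts X], @open_in X >>.

Definition borel_probability (R : realType) (X : set (G -> A))
  (mu : set (pts X) -> R) :=
  [/\ mu set0 = 0%R,
      (forall B, @borel_X X B -> (0 <= mu B)%R),
      (forall F : nat -> set (pts X), (forall n, @borel_X X (F n)) ->
         trivIset [set: nat] F ->
         ((fun n => \sum_(0 <= i < n) mu (F i))%R @ \oo --> mu (\bigcup_n F n))) &
      mu [set: pts X] = 1%R].

Definition shift_set (X : set (G -> A)) (g : G) (B : set (pts X)) : set (pts X) :=
  [set y | exists2 x, B x & proj1_sig y = shift g (proj1_sig x)].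

Definition invariant_measure (X : set (G -> A)) (R : realType)
  (mu : set (pts X) -> R) :=
  forall g B, @borel_X X B -> mu (shift_set g B) = mu B.

Definition full_support (X : set (G -> A)) (R : realType)
  (mu : set (pts X) -> R) :=
  forall U, @open_in X U -> U !=set0 -> (0 < mu U)%R.

End Shifts.

(* Main.v *)
From Pilot Require Import Defs.
From HB Require Import structures.
From mathcomp Require Import all_boot all_order all_algebra.
From mathcomp Require Import monoid finmap.
From mathcomp Require Import all_classical all_reals topology normedtype sequences measure.
From mathcomp Require Import ereal esum.
Set Implicit Arguments. Unset Strict Implicit. Unset Printing Implicit Defensive.
Local Open Scope classical_set_scope.
Local Notation shift := Pilot.Defs.shift.
Import numFieldNormedType.Exports.
Section S.
Variables (G : groupType) (A : finType).
Local Notation T := (prod_topology (fun _ : G => discrete_topology A)).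

Lemma compactT : compact [set: T].
Proof.
have := @tychonoff G (fun _ : G => discrete_topology A) (fun _ => setT)
  (fun _ => @finite_compact (discrete_topology A) setT (@finite_finset A setT)).
by congr (compact _); rewrite eqEsubset.
Qed.

Lemma agree_nbhs (p : T) (E : set G) : finite_set E ->
  nbhs p [set y : T | agree E p y].
Proof.
move=> /finite_fsetP[E' ->].
have : nbhs p (\bigcap_(i in [set` E']) [set y : T | y i = p i]).
  apply: filter_bigI => i _.
  have H := @proj_continuous G (fun _ : G => discrete_topology A) i p.
  apply: (H [set p i]).
  by apply/principal_filterP.
apply: filterS => y Hy h Eh; exact/esym/Hy.
Qed.

Lemma fip (C : {fset G} -> set (G -> A)) :
  (forall F, pd_closed (C F)) ->
  (forall F1 F2 : {fset G}, (F1 `<=` F2)%fset -> C F2 `<=` C F1) ->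
  (forall F, C F !=set0) -> exists x, forall F, C F x.
Proof.
move=> Ccl Cmon Cne.
have finIC : finI [set: {fset G}] C.
  move=> D' _; have [x Cx] := Cne (\bigcup_(i <- D') i)%fset.
  exists x => i /= iD; apply: Cmon Cx.
  exact: (@bigfcup_sup _ _ D' i xpredT id).
have PF := finI_filter finIC.
have := @compactT (filter_from (finI_from [set: {fset G}] C) id) PF (filterT).
move=> [p [_ clp]].
exists p => F; apply: contrapT => nCp.
have [E [finE HE]] := Ccl F p nCp.
have [y [Cy ag]] : C F `&` [set y : T | agree E p y] !=set0.
  apply: clp (agree_nbhs p finE).
  by exists (C F) => //; exact: (@finI_from1 _ _ setT C F I).
exact: (HE y ag Cy).
Qed.
End S.
Section Grp.
Variables (G : groupType) (A : finType).
Local Open Scope group_scope.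

Definition sg (H : set G) := subgroup_in (fun x y : G => x * y) 1 setT H.
Definition fi (H : set G) := finite_index_in (fun x y : G => x * y) setT H.

Lemma sg_inv H x : sg H -> H x -> H x^-1.
Proof. by case=> _ _ _ Hi Hx; apply: (Hi x) => //; rewrite mulgV. Qed.

Lemma sg1 H : sg H -> H 1.
Proof. by case. Qed.

Lemma sgM H x y : sg H -> H x -> H y -> H (x * y).
Proof. by case=> _ _ HM _; apply: HM. Qed.

Lemma sgT : sg setT.
Proof. by split. Qed.

Lemma fiT : fi setT.
Proof.
exists [set 1 : G]; split.
- exact: finite_set1.
- by [].
- by move=> s _; exists 1, s; rewrite mul1g.
Qed.

Lemma sgI H1 H2 : sg H1 -> sg H2 -> sg (H1 `&` H2).
Proof.
move=> s1 s2; split => //.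
- by split; apply: sg1.
- by move=> x y [? ?] [? ?]; split; apply: sgM.
- move=> x y [h1 h2] _ e.
  by case: s1 => _ _ _ i1; case: s2 => _ _ _ i2; split; [apply: (i1 x)|apply: (i2 x)].
Qed.

Lemma fiI H1 H2 : sg H1 -> sg H2 -> fi H1 -> fi H2 -> fi (H1 `&` H2).
Proof.
move=> s1 s2 [R1 [f1 _ c1]] [R2 [f2 _ c2]].
pose ch (r : G * G) : G :=
  if pselect (exists c, exists h1 h2, [/\ H1 h1, H2 h2, c = r.1 * h1 & c = r.2 * h2])
  is left e then projT1 (cid e) else 1.
exists (ch @` (R1 `*` R2)); split => //.
  exact/finite_image/finite_setX.
move=> s _; have [r1 [h1 [Rr1 Hh1 ->]]] := c1 s I.
have [r2 [h2 [Rr2 Hh2 e2]]] := c2 (r1 * h1) I.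
have ex : exists c, exists h1 h2, [/\ H1 h1, H2 h2, c = (r1, r2).1 * h1 & c = (r1, r2).2 * h2].
  by exists (r1 * h1), h1, h2.
exists (ch (r1, r2)), ((ch (r1, r2))^-1 * (r1 * h1)); split.
- by exists (r1, r2).
- rewrite /ch; case: pselect => // e; case: (cid e) => c [k1 [k2 [Hk1 Hk2 ec1 ec2]]] /=.
  split.
  + by rewrite ec1 invgM -mulgA mulKg; apply: sgM => //; apply: sg_inv.
  + by rewrite ec2 e2 invgM -mulgA mulKg; apply: sgM => //; apply: sg_inv.
- by rewrite mulVKg.
Qed.
End Grp.
Section Shift.
Variables (G : groupType) (A : finType).
Local Open Scope group_scope.
Implicit Types (x : G -> A).

Lemma shift1 x : shift 1 x = x.
Proof. by apply: funext => h; rewrite /shift invg1 mul1g. Qed.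

Lemma shiftM g h x : shift g (shift h x) = shift (g * h) x.
Proof. by apply: funext => k; rewrite /shift invgM mulgA. Qed.

Lemma shiftK g x : shift g^-1 (shift g x) = x.
Proof. by rewrite shiftM mulVg shift1. Qed.

Lemma shiftKV g x : shift g (shift g^-1 x) = x.
Proof. by rewrite shiftM mulgV shift1. Qed.

Definition stab x := [set g : G | shift g x = x].

Lemma sg_stab x : sg (stab x).
Proof.
split => //.
- exact: shift1.
- by move=> g h; rewrite /stab /= => e1 e2; rewrite -shiftM e2 e1.
- move=> g h; rewrite /stab /= => e1 _ e.
  have -> : h = g^-1 by rewrite (mulg1_eq e).
  by rewrite -{1}e1 shiftK.
Qed.

Lemma fi_stab x : periodic x -> fi (stab x).
Proof.
move=> per.
pose pk (o : G -> A) : G :=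
  if pselect (exists g, shift g x = o) is left e then projT1 (cid e) else 1.
have pkP g : shift (pk (shift g x)) x = shift g x.
  rewrite /pk; case: pselect => [e|]; first by case: (cid e).
  by case; exists g.
exists (pk @` [set shift g x | g in [set: G]]); split => //.
  exact: finite_image.
move=> s _; have e := pkP s; move: e; set p := pk (shift s x) => e.
exists p, (p^-1 * s); split.
- by exists (shift s x) => //; exists s.
- by rewrite /stab /= -shiftM -e shiftK.
- by rewrite mulVKg.
Qed.

Lemma rf_avoid (H0 : set G) : residually_finite G -> sg H0 -> fi H0 ->
  forall s : seq G, exists K, [/\ sg K, fi K, K `<=` H0 &
    forall e, e \in s -> e != 1 -> ~ K e].
Proof.
move=> rf s0 f0; elim=> [|e s [K [sK fK KH0 av]]].
  by exists H0; split.
have [->|ne1] := eqVneq e 1.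
  exists K; split => // e'; rewrite inE => /orP[/eqP -> /eqP//|]; exact: av.
have [H [sH fH nHe]] : exists H, [/\ sg H, fi H & ~ H e].
  apply: contrapT => nex; move/eqP: ne1; apply; apply: (rf e I) => H sH fH.
  by apply: contrapT => nHe; apply: nex; exists H.
exists (K `&` H); split.
- exact: sgI.
- exact: fiI.
- by move=> g [/KH0].
- move=> e'; rewrite inE => /orP[/eqP -> _ [] //|es ne [Ke' _]].
  exact: (av e' es ne).
Qed.
End Shift.
Section Density.
Variables (G : groupType) (A : finType).
Local Open Scope group_scope.
Variable X : set (G -> A).
Variables (Om : set G) (P : set ({h : G | Om h} -> A)).
Hypothesis finOm : finite_set Om.
Hypothesis XE : X = [set x | forall g, P (fun w => shift g x (proj1_sig w))].
Variable Delta : set G.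
Hypothesis finD : finite_set Delta.
Hypothesis SI : forall Om1 Om2 : set G, finite_set Om1 -> finite_set Om2 ->
      (forall a d, Om1 a -> Delta d -> ~ Om2 (a * d^-1)%g) ->
      forall x1 x2, X x1 -> X x2 ->
        exists x, [/\ X x, agree Om1 x x1 & agree Om2 x x2].
Hypothesis rf : residually_finite G.
Variable z : G -> A.
Hypothesis Xz : X z.
Hypothesis perz : periodic z.

Lemma XshiftE u g : X u -> P (fun w => shift g u (proj1_sig w)).
Proof. by rewrite XE => /(_ g). Qed.

Lemma density x (F : set G) : X x -> finite_set F ->
  exists K y, [/\ sg K, fi K, X y, agree F y x & forall k, K k -> shift k y = y].
Proof.
move=> Xx finF.
pose F1 := F `|` ((fun p => p.1 * p.2^-1) @` (F `*` Delta)).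
have finF1 : finite_set F1 by rewrite finite_setU; split => //; exact/finite_image/finite_setX.
pose N := F1 `|` ((fun t => t.1.1 * t.1.2^-1 * t.2) @` (F1 `*` Om `*` Om)).
have finN : finite_set N.
  rewrite finite_setU; split => //; apply: finite_image; apply: finite_setX => //; exact: finite_setX.
have F1N : F1 `<=` N by move=> u; left.
have FF1 : F `<=` F1 by move=> u; left.
have [x' [Xx' ax' az']] : exists x', [/\ X x', agree F x' x & agree (N `\` F1) x' z].
  apply: SI => //; first exact: finite_setD.
  move=> a d Fa Dd [_]; apply; right; by exists (a, d).
pose E := (fun p => p.1 * p.2^-1) @` (N `*` N).
have finE : finite_set E by exact/finite_image/finite_setX.
have [s Es] : exists s : seq G, E = [set e | e \in s].
  have /finite_fsetP[E' ->] := finE; by exists (enum_fset E').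
have [K [sK fK Kz av]] := rf_avoid rf (sg_stab z) (fi_stab perz) s.
have avE e : K e -> E e -> e = 1.
  move=> Ke; rewrite Es /= => es; apply/eqP; apply: contrapT => ne.
  by apply: (av e es) => //; apply/negP.
have uniq_k k1 k2 g : K k1 -> K k2 -> N (k1^-1 * g) -> N (k2^-1 * g) -> k1 = k2.
  move=> K1 K2 N1 N2.
  have : k1^-1 * k2 = 1.
    apply: avE; first by apply: sgM => //; apply: sg_inv.
    exists (k1^-1 * g, k2^-1 * g) => //=.
    by rewrite invgM invgK mulgA mulgK.
  by move/mulg1_eq; rewrite invgK.
have Kzinv k u : K k -> z (k^-1 * u) = z u.
  by move=> Kk; have := Kz _ Kk; rewrite /stab /= => e; rewrite -{2}e.
pose y g : A := if pselect (exists k, K k /\ N (k^-1 * g)) is left e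
  then x' ((projT1 (cid e))^-1 * g) else z g.
have yE k g : K k -> N (k^-1 * g) -> y g = x' (k^-1 * g).
  move=> Kk Nk; rewrite /y; case: pselect => [e|]; last by case; exists k.
  by case: (cid e) => k' /= [Kk' Nk']; rewrite (uniq_k k' k g).
have yE' g : ~ (exists k, K k /\ N (k^-1 * g)) -> y g = z g.
  by move=> ne; rewrite /y; case: pselect.
exists K, y; split => //.
-
  rewrite XE /= => g.
  have [[w0 [Omw0 [k [Kk F1k]]]]|nA] :=
    pselect (exists w0, Om w0 /\ exists k, K k /\ F1 (k^-1 * (g^-1 * w0))).
  + suff -> : (fun w : {h : G | Om h} => shift g y (proj1_sig w)) =
              (fun w => shift (g * k) x' (proj1_sig w)) by exact: XshiftE.
    apply: funext => -[w Omw] /=; rewrite /shift invgM -mulgA.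
    apply: yE => //; right; exists ((k^-1 * (g^-1 * w0), w0), w) => //=.
    by rewrite [k^-1 * (g^-1 * w0)]mulgA mulgK -mulgA.
  + suff -> : (fun w : {h : G | Om h} => shift g y (proj1_sig w)) =
              (fun w => shift g z (proj1_sig w)) by exact: XshiftE.
    apply: funext => -[w Omw] /=; rewrite /shift.
    have [[k [Kk Nk]]|nk] := pselect (exists k, K k /\ N (k^-1 * (g^-1 * w))).
    * rewrite (yE k) // az'; first by rewrite Kzinv.
      split => // F1k.
      by apply: nA; exists w; split => //; exists k.
    * exact: yE'.
-
  move=> f Ff; rewrite (yE 1) ?invg1 ?mul1g; [exact: ax'| exact: sg1|].
  by apply: F1N; apply: FF1.
-
  move=> k0 Kk0; apply: funext => g; rewrite /shift.
  have [[k [Kk Nk]]|nk] := pselect (exists k, K k /\ N (k^-1 * g)).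
  + have K' : K (k0^-1 * k) by apply: sgM => //; apply: sg_inv.
    have N' : N ((k0^-1 * k)^-1 * (k0^-1 * g)) by rewrite invgM invgK -mulgA mulVKg.
    by rewrite (yE _ _ K' N') (yE k g Kk Nk) invgM invgK -mulgA mulVKg.
  + rewrite yE' ?yE' ?Kzinv //.
    move=> [k [Kk Nk]]; apply: nk; exists (k0 * k); split; first exact: sgM.
    by rewrite invgM -mulgA.
Qed.
End Density.
Section Fin.
Lemma fin_inj (T U : Type) (S : set T) (B : set U) (f : T -> U) :
  finite_set B -> (forall q, S q -> B (f q)) ->
  (forall a b, S a -> S b -> f a = f b -> a = b) -> finite_set S.
Proof.
move=> finB SB inj.
have [[q0 _]|none] := pselect (exists q, S q); last first.
  suff -> : S = set0 by exact: finite_set0.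
  by apply/seteqP; split => // q Sq; apply: none; exists q.
pose g u := if pselect (exists q, S q /\ f q = u) is left e then projT1 (cid e) else q0.
apply: (sub_finite_set _ (finite_image g finB)) => q Sq.
exists (f q); first exact: SB.
rewrite /g; case: pselect => [e|]; last by case; exists q.
by case: (cid e) => q' [Sq' eq'] /=; apply: inj.
Qed.

Lemma inj_surj (T : Type) (S : set T) (f : T -> T) : finite_set S ->
  (forall q, S q -> S (f q)) ->
  (forall a b, S a -> S b -> f a = f b -> a = b) ->
  forall y, S y -> exists x, S x /\ f x = y.
Proof.
move=> finS SS inj.
pose T' := {classic T}.
pose S' : set T' := S.
pose f' : T' -> T' := f.
have /finite_fsetP[s sE] : finite_set S' by [].
have inj' : {in s &, injective f'}.
  move=> a b as_ bs; apply: inj.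
  - by have : S' a by rewrite sE.
  - by have : S' b by rewrite sE.
have sub : (f' @` s `<=` s)%fset.
  apply/fsubsetP => k /imfsetP [a as_ ->].
  have Sa : S' a by rewrite sE.
  have : S' (f' a) by apply: SS.
  by rewrite sE.
have eqs : (f' @` s)%fset = s.
  apply/eqP; rewrite eqEfcard sub /=.
  by rewrite card_in_imfset //.
move=> y Sy.
have : (y : T') \in s by have : S' y by []; rewrite sE.
rewrite -eqs => /imfsetP [x xs ->]; exists x; split => //.
by have : [set` s] x by []; rewrite -sE.
Qed.
End Fin.
Section CA.
Variables (G : groupType) (A : finType).
Local Open Scope group_scope.
Variable X : set (G -> A).
Hypothesis Xcl : pd_closed X.
Hypothesis Xinv : shift_invariant X.
Hypothesis dens : forall (x : G -> A) F, X x -> finite_set F ->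
  exists K y, [/\ sg K, fi K, X y, agree F y x & forall k, K k -> shift k y = y].

Lemma pts_eq (a b : pts X) : proj1_sig a = proj1_sig b -> a = b.
Proof. by case: a => a ha; case: b => b hb /= e; exact: eq_exist. Qed.

Definition FixK (K : set G) := [set q : pts X | forall k, K k -> shift k (proj1_sig q) = proj1_sig q].

Lemma dens_pts (q : pts X) (F : set G) : finite_set F ->
  exists K p, [/\ sg K, fi K, FixK K p & agree F (proj1_sig p) (proj1_sig q)].
Proof.
move=> finF; have [K [y [sK fK Xy ag inv]]] := dens (proj2_sig q) finF.
by exists K, (exist _ y Xy).
Qed.

Lemma code_exists (K : set G) : sg K -> fi K ->
  exists n (cf : pts X -> n.-tuple A),
    forall a b, FixK K a -> FixK K b -> cf a = cf b -> a = b.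
Proof.
move=> sK [R [finR _ cR]].
have /finite_fsetP[sR RE] := finR.
exists (size (enum_fset sR)),
  (fun q => map_tuple (fun r => proj1_sig q r^-1) (in_tuple (enum_fset sR))).
move=> a b Fa Fb /(congr1 val) /= /eq_in_map e.
apply: pts_eq; apply: funext => g.
have [r [h [Rr Kh gE]]] := cR g^-1 I.
have -> : g = h^-1 * r^-1.
  by rewrite -invgM -gE; symmetry; apply: invgK.
have shE (q : pts X) : FixK K q -> proj1_sig q (h^-1 * r^-1) = proj1_sig q r^-1.
  by move=> Fq; rewrite -[in RHS](Fq h Kh).
rewrite shE // shE //; apply: e.
by have : [set` sR] r by rewrite -RE.
Qed.

Lemma FixK_fin K : sg K -> fi K -> finite_set (FixK K).
Proof.
move=> sK fK; have [n [cf inj]] := code_exists sK fK.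
exact: (@fin_inj _ _ _ [set: n.-tuple A] cf finite_finset).
Qed.

Lemma CA_fix tau K q : cellular_automaton tau -> FixK K q -> FixK K (tau q).
Proof.
move=> [_ eqv] Fq k Kk.
have := eqv k q q; rewrite /= Fq // => /(_ erefl) e; exact/esym.
Qed.

Lemma CA_closed_nbhd tau (q : pts X) (F : set G) (y0 : G -> A) :
  cellular_automaton tau -> finite_set F ->
  ~ agree F (proj1_sig (tau q)) y0 ->
  exists F', finite_set F' /\ forall (q' : pts X),
    agree F' (proj1_sig q) (proj1_sig q') -> ~ agree F (proj1_sig (tau q')) y0.
Proof.
move=> [cont _] finF nag; have [F' [finF' H]] := cont q F finF.
exists F'; split => // q' ag ag'; apply: nag => h Fh.
by rewrite (H q' ag h Fh); exact: ag'.
Qed.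

Lemma surj_thm : surjunctive X.
Proof.
move=> tau CAt injt y0.
pose C (F : {fset G}) : set (G -> A) := [set u | exists h : X u,
  agree [set` F] (proj1_sig (tau (exist _ u h))) (proj1_sig y0)].
have [u Cu] : exists u, forall F, C F u.
  apply: fip.
  - move=> F u nCu.
    have [Xu|nXu] := pselect (X u); last first.
      have [F0 [finF0 HF0]] := Xcl nXu.
      by exists F0; split => // v ag [hv _]; exact: (HF0 v ag hv).
    have nag : ~ agree [set` F] (proj1_sig (tau (exist _ u Xu))) (proj1_sig y0).
      by move=> ag; apply: nCu; exists Xu.
    have [F' [finF' HF']] := CA_closed_nbhd CAt (finite_fset F) nag.
    exists F'; split => // v ag [hv agv].
    exact: (HF' (exist _ v hv) ag agv).
  - move=> F1 F2 sF u [h ag]; exists h => g /= gF1; apply: ag.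
    by move/fsubsetP: sF => /(_ g gF1).
  - move=> F; have [K [p [sK fK Fp agp]]] := dens_pts y0 (finite_fset F).
    have [x [Fx tx]] := inj_surj (FixK_fin sK fK) (fun q => CA_fix CAt)
      (fun a b _ _ => @injt a b) Fp.
    exists (proj1_sig x), (proj2_sig x).
    have -> : exist _ (proj1_sig x) (proj2_sig x) = x by apply: pts_eq.
    by rewrite tx.
have [hu _] := Cu fset0.
exists (exist _ u hu); apply: pts_eq; apply: funext => g.
have [h' ag] := Cu [fset g]%fset.
have -> : exist _ u hu = exist _ u h' by apply: pts_eq.
by apply: ag; rewrite /= inE.
Qed.

Lemma CA_id : cellular_automaton (@id (pts X)).
Proof. by split => // x F finF; exists F. Qed.

Lemma CA_comp (f g : pts X -> pts X) :
  cellular_automaton f -> cellular_automaton g -> cellular_automaton (f \o g).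
Proof.
move=> [cf ef] [cg eg]; split.
- move=> x F finF; have [F2 [finF2 H2]] := cf (g x) F finF.
  have [F1 [finF1 H1]] := cg x F2 finF2.
  by exists F1; split => // y ag; apply: H2; apply: H1.
- by move=> k x y e /=; apply: ef; apply: eg.
Qed.

Lemma CA_inv (tau sigma : pts X -> pts X) : cellular_automaton tau ->
  cancel tau sigma -> cancel sigma tau -> cellular_automaton sigma.
Proof.
move=> CAt c1 c2; have [cont eqv] := CAt; split; last first.
  move=> k x y e.
  pose w : pts X := exist _ (shift k (proj1_sig (sigma x))) (Xinv k (proj2_sig (sigma x))).
  have tw : tau w = y.
    apply: pts_eq; rewrite e (eqv k (sigma x) w erefl) c2 //.
  by rewrite -tw c1.
move=> x F finF; apply: contrapT => nex.
pose C (F' : {fset G}) : set (G -> A) := [set u | exists h : X u,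
  agree [set` F'] (proj1_sig (tau (exist _ u h))) (proj1_sig x) /\
  ~ agree F u (proj1_sig (sigma x))].
have [u Cu] : exists u, forall F, C F u.
  apply: fip.
  - move=> F' u nCu.
    have [Xu|nXu] := pselect (X u); last first.
      have [F0 [finF0 HF0]] := Xcl nXu.
      by exists F0; split => // v ag [hv _]; exact: (HF0 v ag hv).
    have [ag|nag] := pselect (agree F u (proj1_sig (sigma x))).
      exists F; split => // v agv [hv [_ nagv]]; apply: nagv => g Fg.
      by rewrite -agv // ag.
    have nag' : ~ agree [set` F'] (proj1_sig (tau (exist _ u Xu))) (proj1_sig x).
      by move=> ag; apply: nCu; exists Xu.
    have [F1 [finF1 HF1]] := CA_closed_nbhd CAt (finite_fset F') nag'.
    exists F1; split => // v ag [hv [agv _]].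
    exact: (HF1 (exist _ v hv) ag agv).
  - move=> F1 F2 sF u [h [ag nag]]; exists h; split => // g /= gF1; apply: ag.
    by move/fsubsetP: sF => /(_ g gF1).
  - move=> F'.
    have [y [agy nagy]] : exists y : pts X, agree [set` F'] (proj1_sig x) (proj1_sig y) /\
       ~ agree F (proj1_sig (sigma x)) (proj1_sig (sigma y)).
      apply: contrapT => ney; apply: nex; exists [set` F']; split; first exact: finite_fset.
      move=> y ag; apply: contrapT => nag; apply: ney; by exists y.
    exists (proj1_sig (sigma y)), (proj2_sig (sigma y)).
    have -> : exist _ (proj1_sig (sigma y)) (proj2_sig (sigma y)) = sigma y by apply: pts_eq.
    rewrite c2; split; first by move=> g Fg; rewrite agy.
    by move=> ag; apply: nagy => g Fg; rewrite ag.
have [hu _] := Cu fset0.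
pose q : pts X := exist _ u hu.
have tq : tau q = x.
  apply: pts_eq; apply: funext => g.
  have [h' [ag _]] := Cu [fset g]%fset.
  have -> : q = exist _ u h' by apply: pts_eq.
  by apply: ag; rewrite /= inE.
have [_ [_ nag]] := Cu fset0.
by apply: nag; rewrite -tq c1.
Qed.

Lemma Aut_rf_thm : Aut_residually_finite X.
Proof.
move=> tau [CAt bijt] Hall.
apply: funext => x /=; apply: contrapT => ne.
have [g0 neg0] : exists g0, proj1_sig (tau x) g0 <> proj1_sig x g0.
  apply: contrapT => nex; apply: ne; apply: pts_eq; apply: funext => g.
  by apply: contrapT => ng; apply: nex; exists g.
have [F' [finF' HF']] := CAt.1 x [set g0] (finite_set1 g0).
have finU : finite_set (F' `|` [set g0]) by rewrite finite_setU; split => //; exact: finite_set1.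
have [K [p [sK fK Fp agp]]] := dens_pts x finU.
have ntp : tau p <> p.
  move=> e; apply: neg0.
  have agx : agree F' (proj1_sig x) (proj1_sig p) by move=> g Fg; rewrite agp //; left.
  rewrite (HF' p agx g0 erefl) e agp //; by right.
pose HK := [set s : pts X -> pts X | Aut s /\ forall q, FixK K q -> s q = q].
suff : HK tau by move=> [_ /(_ p Fp)].
apply: Hall.
- split.
  + by move=> s [].
  + split => //; split; first exact: CA_id.
    by exists id.
  + move=> s1 s2 [[C1 B1] f1] [[C2 B2] f2]; split.
      by split; [exact: CA_comp | exact: bij_comp].
    by move=> q Fq /=; rewrite f2 // f1.
  + move=> s1 s2 [_ f1] [C2 B2] e; split => // q Fq.
    have e' : s1 (s2 q) = q by have := congr1 (fun f => f q) e.
    by rewrite -[RHS]e' f1 //; apply: CA_fix.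
- have [n [cf cfinj]] := code_exists sK fK.
  have /(@finite_fsetP {classic (pts X)}) [sF FE] := FixK_fin sK fK.
  pose l := enum_fset sF.
  have inl q : FixK K q -> (q : {classic (pts X)}) \in l.
    by move=> Fq; have : [set` sF] (q : {classic (pts X)}) by rewrite -FE.
  pose KS := [set f : pts X -> pts X | (forall q, ~ FixK K q -> f q = q) /\
     forall q, FixK K q -> FixK K (f q)].
  have finKS : finite_set KS.
    apply: (@fin_inj _ _ _ [set: (size l).-tuple (n.-tuple A)]
      (fun f => map_tuple (fun q => cf (f q)) (in_tuple l)) finite_finset) => //.
    move=> f1 f2 [o1 i1] [o2 i2] /(congr1 val) /= /eq_in_map e.
    apply: funext => q.
    have [Fq|nFq] := pselect (FixK K q); last by rewrite o1 // o2.
    by apply: cfinj; [exact: i1|exact: i2|exact: e (inl q Fq)].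
  pose kappa (s : pts X -> pts X) := fun q => if pselect (FixK K q) then s q else q.
  pose rep f := if pselect (exists s, Aut s /\ kappa s = f) is left e
    then projT1 (cid e) else id.
  have repA f : Aut (rep f).
    rewrite /rep; case: pselect => [e|_]; first by case: (cid e) => s [].
    by split; [exact: CA_id| exists id].
  exists (rep @` KS); split.
  + exact: finite_image.
  + by move=> _ [f _ <-].
  + move=> s [Cs Bs].
    have KSs : KS (kappa s).
      split; first by move=> q nq; rewrite /kappa; case: pselect.
      move=> q Fq; rewrite /kappa; destruct (pselect (FixK K q)) => //; exact: CA_fix.
    have [Cr Br] := repA (kappa s).
    have kr : kappa (rep (kappa s)) = kappa s.
      rewrite /rep; case: pselect => [e|]; first by case: (cid e) => s' [].
      by case; exists s.
    move: Cr Br kr; set r := rep (kappa s) => Cr Br kr.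
    case: (Br) => ri c1 c2.
    exists r, (ri \o s); split.
    * by exists (kappa s).
    * split.
        split; first exact: CA_comp (CA_inv Cr c1 c2) Cs.
        by apply: bij_comp => //; exists r.
      move=> q Fq /=.
      have : kappa r q = kappa s q by rewrite kr.
      rewrite /kappa; destruct (pselect (FixK K q)) => //= e.
      by rewrite -e c1.
    * by apply: funext => q /=; rewrite c2.
Qed.
End CA.
Section MeasCore.
Import Order.TTheory GRing.Theory Num.Theory.
Local Open Scope ring_scope.
Variables (R : realType) (T : choiceType) (O : nat -> set T) (q : nat -> T).
Hypothesis finO : forall m, finite_set (O m).
Hypothesis Oq : forall m, O m (q m).

Definition cnt m (B : set T) : \bar R := (\esum_(o in O m `&` B) 1)%E.
Definition crd m : nat := #|` fset_set (O m)|.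
Definition wt m : R := ((2 ^ m.+1)%:R * (crd m)%:R)^-1.
Definition mue (B : set T) : \bar R := (\sum_(m <oo) (wt m)%:E * cnt m B)%E.

Lemma cnt_ge0 m B : (0 <= cnt m B)%E.
Proof. by apply: esum_ge0. Qed.

Lemma crd_gt0 m : (0 < crd m)%N.
Proof.
rewrite /crd cardfs_gt0; apply/eqP => e.
have : q m \in fset_set (O m) by rewrite in_fset_set // inE.
by rewrite e inE.
Qed.

Lemma wt_gt0 m : 0 < wt m.
Proof. by rewrite invr_gt0 mulr_gt0 // ltr0n ?expn_gt0 // crd_gt0. Qed.

Lemma term_ge0 m B : (0 <= (wt m)%:E * cnt m B)%E.
Proof. by apply: mule_ge0; [rewrite lee_fin ltW // wt_gt0 | exact: cnt_ge0]. Qed.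

Lemma cnt_setT m : cnt m setT = (crd m)%:R%:E.
Proof.
rewrite /cnt setIT esum_fset //.
rewrite fsbig_finite //= sumEFin; congr (_%:E).
by rewrite /crd -sum1_size natr_sum.
Qed.

Lemma cnt_le m B : (cnt m B <= cnt m setT)%E.
Proof.
rewrite /cnt esum_mkcondr setIT; apply: le_esum => i _.
by case: ifP.
Qed.

Lemma term_setT m : ((wt m)%:E * cnt m setT)%E = ((2 ^ m.+1)%:R^-1)%:E.
Proof.
rewrite cnt_setT -EFinM; congr (_%:E).
rewrite /wt invfM -mulrA mulVf ?mulr1 //.
by rewrite pnatr_eq0 -lt0n crd_gt0.
Qed.

Lemma mue_ge0 B : (0 <= mue B)%E.
Proof. by apply: nneseries_ge0 => n _ _; exact: term_ge0. Qed.

Lemma mue_le B : (mue B <= mue setT)%E.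
Proof.
apply: lee_nneseries => [n _ _|n _]; first exact: term_ge0.
by apply: lee_wpmul2l; [rewrite lee_fin ltW // wt_gt0|exact: cnt_le].
Qed.

Lemma mue_setT_le1 : (mue setT <= 1)%E.
Proof.
rewrite /mue.
under eq_eseriesr do rewrite term_setT.
have := @epsilon_trick R (fun=> 0%E) 1 xpredT (fun=> lexx _) ler01.
have e0 : (\sum_(0 <= i <oo) (fun=> (0 : \bar R)) i = 0)%E by rewrite eseries0.
rewrite e0 add0e; apply: le_trans; apply: lee_nneseries => //.
by move=> n _; rewrite add0e div1r.
Qed.

Lemma mue_setT_gt0 : (0 < mue setT)%E.
Proof.
apply: (@lt_le_trans _ _ (\sum_(0 <= i < 1) ((wt i)%:E * cnt i setT))%E).
  by rewrite big_nat1 term_setT lte_fin invr_gt0 ltr0n expn_gt0.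
by apply: nneseries_lim_ge => n _ _; exact: term_ge0.
Qed.

Lemma mue_fin B : mue B \is a fin_num.
Proof.
rewrite ge0_fin_numE ?mue_ge0 //.
by apply: (le_lt_trans (mue_le B)); apply: (le_lt_trans mue_setT_le1); rewrite ltry.
Qed.

Definition c0 : R := fine (mue setT).
Definition mu (B : set T) : R := fine (mue B) / c0.

Lemma c0_gt0 : 0 < c0.
Proof.
apply: fine_gt0; rewrite mue_setT_gt0 /=.
by apply: (le_lt_trans mue_setT_le1); rewrite ltry.
Qed.

Lemma mu0 : mu set0 = 0.
Proof.
rewrite /mu /mue eseries0 ?mul0r // => i _ _.
by rewrite /cnt setI0 esum_set0 mule0.
Qed.

Lemma mu_ge0 B : 0 <= mu B.
Proof. by rewrite /mu divr_ge0 ?fine_ge0 ?mue_ge0 // ltW // c0_gt0. Qed.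

Lemma mu_setT : mu setT = 1.
Proof. by rewrite /mu divff // gt_eqF // c0_gt0. Qed.

Lemma mue_bigcup (F : nat -> set T) : trivIset setT F ->
  mue (\bigcup_n F n) = (\sum_(i <oo) mue (F i))%E.
Proof.
move=> tF; rewrite /mue.
transitivity (\sum_(m <oo) \sum_(i <oo) ((wt m)%:E * cnt m (F i)))%E.
  apply: eq_eseriesr => m _; rewrite nneseriesZl; last by move=> i _; exact: cnt_ge0.
  congr (_ * _)%E.
  rewrite /cnt setI_bigcupr nneseries_sum_bigcup //.
  exact: trivIset_setIl.
by rewrite nneseries_interchange // => i j; exact: term_ge0.
Qed.

Lemma mu_sigma (F : nat -> set T) : trivIset setT F ->
  (fun n => \sum_(0 <= i < n) mu (F i)) @ \oo --> mu (\bigcup_n F n).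
Proof.
move=> tF.
have cv : (fun n => \sum_(0 <= i < n) mue (F i))%E @ \oo --> mue (\bigcup_n F n).
  rewrite mue_bigcup //; apply: is_cvg_nneseries => n _ _; exact: mue_ge0.
rewrite -(fineK (mue_fin _)) in cv.
have cf := fine_cvg cv.
have -> : (fun n => \sum_(0 <= i < n) mu (F i)) =
    (fun n => (fine \o (fun n => \sum_(0 <= i < n) mue (F i))%E) n * c0^-1).
  apply: funext => n /=; rewrite /mu -mulr_suml sum_fine //.
  by move=> i _; exact: mue_fin.
by apply: cvgMr_tmp; apply: cf.
Qed.

Lemma mu_inv B B' (f : T -> T) :
  (forall m, set_bij (O m `&` B) (O m `&` B') f) -> mu B' = mu B.
Proof.
move=> bij; rewrite /mu /mue; congr (fine _ / _); apply: eq_eseriesr => m _.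
by congr (_ * _)%E; rewrite /cnt (@reindex_esum R T T _ _ f (fun=> 1%E) (bij m)).
Qed.

Lemma mu_pos U m : U (q m) -> 0 < mu U.
Proof.
move=> Uq; rewrite /mu divr_gt0 ?c0_gt0 //; apply: fine_gt0; apply/andP; split; last first.
  by have := mue_fin U; rewrite ge0_fin_numE ?mue_ge0.
apply: (@lt_le_trans _ _ ((wt m)%:E * cnt m U)%E).
  apply: mule_gt0; first by rewrite lte_fin wt_gt0.
  apply: (@lt_le_trans _ _ 1%E); first by rewrite lte_fin.
  apply: esum_ge; exists [set q m]; last by rewrite fsbig_set1.
  by split; [exact: finite_set1 | move=> x -> ].
apply: (@le_trans _ _ (\sum_(0 <= i < m.+1) ((wt i)%:E * cnt i U))%E).
  rewrite big_nat_recr //= leeDr //; apply: sume_ge0 => i _; exact: term_ge0.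
by apply: nneseries_lim_ge => n _ _; exact: term_ge0.
Qed.
End MeasCore.
Section MeasExist.
Variables (G : groupType) (A : finType).
Local Open Scope group_scope.
Variable X : set (G -> A).
Hypothesis Xinv : shift_invariant X.
Hypothesis dens : forall (x : G -> A) F, X x -> finite_set F ->
  exists K y, [/\ sg K, fi K, X y, agree F y x & forall k, K k -> shift k y = y].
Variable z : G -> A.
Hypothesis Xz : X z.
Hypothesis perz : periodic z.

Lemma fi_periodic (K : set G) (y : G -> A) : sg K -> fi K ->
  (forall k, K k -> shift k y = y) -> periodic y.
Proof.
move=> sK [R [finR _ cR]] inv.
apply: (sub_finite_set _ (finite_image (fun r => shift r y) finR)).
move=> u [g _ <-]; have [r [h [Rr Kh ->]]] := cR g I.
by exists r => //; rewrite -shiftM (inv h Kh).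
Qed.

Lemma dense_seq : countable [set: G] -> exists q : nat -> pts X,
  (forall m, periodic (proj1_sig (q m))) /\
  forall (x : pts X) (F : set G), finite_set F ->
    exists m, agree F (proj1_sig x) (proj1_sig (q m)).
Proof.
move=> /countable_injP [f finj].
pose e n : G := if pselect (exists g, f g = n) is left h then projT1 (cid h) else 1.
have eP g : e (f g) = g.
  rewrite /e; case: pselect => [h|]; last by case; exists g.
  by case: (cid h) => g' /= /finj; apply; rewrite inE.
pose a0 : A := z 1.
pose cyl (s : seq A) (y : G -> A) := forall i, (i < size s)%N -> y (e i) = nth a0 s i.
pose per0 : pts X := exist _ z Xz.
pose qq (s : seq A) : pts X :=
  if pselect (exists p : pts X, periodic (proj1_sig p) /\ cyl s (proj1_sig p))
  is left h then projT1 (cid h) else per0.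
have qqP s : (exists p : pts X, periodic (proj1_sig p) /\ cyl s (proj1_sig p)) ->
    periodic (proj1_sig (qq s)) /\ cyl s (proj1_sig (qq s)).
  by move=> ex; rewrite /qq; case: pselect => [h|//]; case: (cid h).
have qqper s : periodic (proj1_sig (qq s)).
  by rewrite /qq; case: pselect => [h|//]; case: (cid h) => p [].
exists (fun m => if @choice.unpickle (seq A) m is Some s then qq s else per0); split.
  by move=> m; case: choice.unpickle.
move=> x F finF.
have /finite_fsetP[F' FE] := finF.
pose n := (\max_(h <- F') f h).+1.
have fn h : F h -> (f h < n)%N.
  by rewrite FE => hF; rewrite ltnS; apply: leq_bigmax_seq.
pose Fn := e @` `I_n.
have finFn : finite_set Fn by apply: finite_image; exact: finite_II.
have [K [y [sK fK Xy agy invy]]] := dens (proj2_sig x) finFn.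
pose s := [seq proj1_sig x (e i) | i <- iota 0 n].
have sz : size s = n by rewrite size_map size_iota.
have ex : exists p : pts X, periodic (proj1_sig p) /\ cyl s (proj1_sig p).
  exists (exist _ y Xy); split; first exact: fi_periodic invy.
  move=> i; rewrite sz => ilt /=.
  rewrite agy; last by exists i.
  by rewrite (nth_map 0) ?size_iota // nth_iota.
exists (choice.pickle s); rewrite choice.pickleK.
have [_ cyq] := qqP s ex.
move=> h Fh; rewrite -(eP h) cyq ?sz ?fn //.
by rewrite (nth_map 0) ?size_iota ?fn // nth_iota ?fn.
Qed.

Lemma meas_thm (R : realType) : countable [set: G] ->
  exists mu : set (pts X) -> R,
    [/\ borel_probability mu, invariant_measure mu & full_support mu].
Proof.
move=> cG; have [q [qper qdense]] := dense_seq cG.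
pose T := {classic (pts X)}.
pose O m : set T := [set y | exists g, proj1_sig y = shift g (proj1_sig (q m))].
have finO m : finite_set (O m).
  apply: (@fin_inj _ _ _ [set shift g (proj1_sig (q m)) | g in [set: G]]
    (fun y : T => proj1_sig y) (qper m)).
    by move=> y [g e]; exists g.
  by move=> a b _ _; apply: pts_eq.
have Oq m : O m (q m) by exists 1; rewrite shift1.
pose phi (g : G) (y : pts X) : pts X :=
  exist _ (shift g (proj1_sig y)) (Xinv g (proj2_sig y)).
exists (@mu R T O); split.
- split.
  + exact: mu0.
  + by move=> B _; apply: (mu_ge0 R finO Oq).
  + by move=> F _ tF; apply: (mu_sigma finO Oq tF).
  + exact: (mu_setT R finO Oq).
- move=> g B _; apply: (@mu_inv R T O B _ (phi g)) => m; split.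
  + move=> y [[h ey] By]; split.
      by exists (g * h); rewrite /= ey shiftM.
    by exists y.
  + move=> a b _ _ /(congr1 (@proj1_sig _ _)) /= e.
    by apply: pts_eq; rewrite -(shiftK g (proj1_sig a)) e shiftK.
  + move=> y [[h ey] [x Bx ex]].
    have Ox : O m x.
      exists (g^-1 * h); rewrite -shiftM -ey ex shiftK //.
    exists x => //; apply: pts_eq; by rewrite /= ex.
- move=> U oU [x Ux].
  have [F [finF HF]] := oU x Ux.
  have [m agm] := qdense x F finF.
  exact: (mu_pos R finO Oq (HF (q m) agm)).
Qed.
End MeasExist.

Unset Implicit Arguments.

Theorem corollary1p2 (R : realType) (G : groupType) (A : finType)
  (X : set (G -> A)) :
  residually_finite G ->
  subshift X -> finite_type X -> strongly_irreducible X ->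
  (exists x, X x /\ periodic x) ->
  [/\ surjunctive X, Aut_residually_finite X &
      (countable [set: G] ->
        exists mu : set (pts X) -> R,
          [/\ borel_probability mu, invariant_measure mu & full_support mu])].
Proof.
move=> rf [Xcl Xinv] [Om [P [finOm XE]]] [Delta [finD SI]] [z [Xz perz]].
have dens : forall (x : G -> A) F, X x -> finite_set F ->
  exists K y, [/\ sg K, fi K, X y, agree F y x & forall k, K k -> shift k y = y].
  by move=> x F Xx fF; exact: (density finOm XE finD SI rf Xz perz Xx fF).
split.
- exact: (surj_thm Xcl dens).
- exact: (Aut_rf_thm Xcl Xinv dens).
- move=> cG; exact: (meas_thm Xinv dens Xz perz R cG).
Qed.
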